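(* Let $\alpha\in[0,\pi/2)$ and let $P,C$ be causal stable systems on $\mathcal{L}_{2e+}^n$ with $\theta(P)\le\alpha$ and $\theta(C)\le\alpha$, such that the feedback system $P\#C$ is well-posed. Let $G:e_1\mapsto y_1$ be the closed-loop map of $P\#C|_{e_2=0}$. Then $G$ is stable and $\theta(G)\le\alpha$.
   Context: For $n\ge1$, $\mathcal{L}_2^n$ is the set of measurable $u:\mathbb{R}\to\mathbb{R}^n$ with $\|u\|_2^2=\int|u(t)|^2dt<\infty$, inner product $\langle u,v\rangle=\int u(t)^Tv(t)\,dt$; $\mathcal{L}_{2+}=\{u\in\mathcal{L}_2:u(t)=0\ \text{for}\ t<0\}$. For $T\ge0$, $(\Gamma_Tu)(t)=u(t)$ for $t\le T$, $0$ for $t>T$; $\mathcal{L}_{2e+}=\{u:\Gamma_Tu\in\mathcal{L}_{2+}\ \forall T\ge0\}$. A system is an operator $P:\mathcal{L}_{2e+}\to\mathcal{L}_{2e+}$ with $P0=0$, $P\ne0$; causal if $\Gamma_TP=\Gamma_TP\Gamma_T$ for all $T\ge 0$; a causal system is stable if $Pu\in\mathcal{L}_{2+}$ for all $u\in\mathcal{L}_{2+}$ and $\sup_{0\ne u\in\mathcal{L}_{2+}}\|Pu\|_2/\|u\|_2<\infty$. The singular angle $\theta(P)\in[0,\pi]$ is given by $\cos\theta(P)=\inf\{\langle u,Pu\rangle/(\|u\|_2\|Pu\|_2):0\neq u\in\mathcal{L}_{2+},\ Pu\ne0\}$. The feedback system $P\#C$: $u_1=e_1-y_2$, $u_2=e_2+y_1$,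 $y_1=Pu_1$, $y_2=Cu_2$; it is well-posed if $(u_1,u_2)\mapsto(u_1+Cu_2,\ u_2-Pu_1)$ has a causal inverse on $\mathcal{L}_{2e+}\times\mathcal{L}_{2e+}$. $P\#C|_{e_2=0}$ denotes the loop with $e_2=0$. *)

(* Defs.v *)
From HB Require Import structures.
From mathcomp Require Import all_boot all_order all_algebra.
From mathcomp Require Import all_classical all_reals all_analysis.
Set Implicit Arguments. Unset Strict Implicit. Unset Printing Implicit Defensive.
Import Order.TTheory GRing.Theory Num.Theory.
Local Open Scope classical_set_scope.
Local Open Scope ring_scope.

Section Signals.
Variables (R : realType) (n : nat).

Definition signal := R -> 'I_n -> R.

Definition sig0 : signal := fun _ _ => 0.

Definition vdot (x y : 'I_n -> R) : R := \sum_(i < n) x i * y i.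

Definition sig_measurable (u : signal) : Prop :=
  forall i : 'I_n, measurable_fun setT (fun t : R => u t i).

Definition energy (u : signal) : \bar R :=
  (\int[@lebesgue_measure R]_(t in setT) (vdot (u t) (u t))%:E)%E.

Definition L2 (u : signal) : Prop := sig_measurable u /\ (energy u < +oo)%E.

Definition L2p (u : signal) : Prop := L2 u /\ (forall t : R, t < 0 -> u t = 0).

Definition trunc (T : R) (u : signal) : signal :=
  fun t => if t <= T then u t else 0.

Definition L2ep (u : signal) : Prop := forall T : R, 0 <= T -> L2p (trunc T u).

Definition norm2 (u : signal) : R := Num.sqrt (fine (energy u)).
Definition inner (u v : signal) : R :=
  Rintegral (@lebesgue_measure R) setT (fun t => vdot (u t) (v t)).

(* u is a nonzero element of L_2 (i.e. nonzero as an equivalence class) *)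
Definition nonzero (u : signal) : Prop := norm2 u != 0.

Definition is_system (P : signal -> signal) : Prop :=
  [/\ (forall u, L2ep u -> L2ep (P u)),
      P sig0 = sig0 &
      exists u, L2ep u /\ exists T, 0 <= T /\ nonzero (trunc T (P u))].

Definition causal (P : signal -> signal) : Prop :=
  forall T u, 0 <= T -> L2ep u -> trunc T (P u) = trunc T (P (trunc T u)).

Definition stable (P : signal -> signal) : Prop :=
  [/\ is_system P, causal P,
      (forall u, L2p u -> L2p (P u)) &
      exists M : R, forall u, L2p u -> nonzero u -> norm2 (P u) / norm2 u <= M].

Definition angle_ratios (P : signal -> signal) : set R :=
  [set r | exists u, [/\ L2p u, nonzero u, nonzero (P u) &
                        r = inner u (P u) / (norm2 u * norm2 (P u))]].

Definition singular_angle (P : signal -> signal) : R := acos (inf (angle_ratios P)).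

Definition trunc2 (T : R) (w : signal * signal) : signal * signal :=
  (trunc T w.1, trunc T w.2).
Definition L2ep2 (w : signal * signal) : Prop := L2ep w.1 /\ L2ep w.2.

Definition loop_map (P C : signal -> signal) (w : signal * signal) : signal * signal :=
  (fun t i => w.1 t i + C w.2 t i, fun t i => w.2 t i - P w.1 t i).

Definition causal_inverse_of (P C : signal -> signal)
    (Finv : signal * signal -> signal * signal) : Prop :=
  [/\ (forall w, L2ep2 w -> L2ep2 (Finv w)),
      (forall w, L2ep2 w -> loop_map P C (Finv w) = w),
      (forall w, L2ep2 w -> Finv (loop_map P C w) = w) &
      (forall T w, 0 <= T -> L2ep2 w -> trunc2 T (Finv w) = trunc2 T (Finv (trunc2 T w)))].

Definition well_posed (P C : signal -> signal) : Prop :=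
  exists Finv, causal_inverse_of P C Finv.

Definition closed_loop (P : signal -> signal)
    (Finv : signal * signal -> signal * signal) : signal -> signal :=
  fun e1 => P (Finv (e1, sig0)).1.

End Signals.

(* Main.v *)
Require Import Defs.
From HB Require Import structures.
From mathcomp Require Import all_boot all_order all_algebra.
From mathcomp Require Import all_classical all_reals all_analysis.
From mathcomp Require Import measurable_realfun ring lra.
Set Implicit Arguments. Unset Strict Implicit. Unset Printing Implicit Defensive.
Import Order.TTheory GRing.Theory Num.Theory.
Import numFieldNormedType.Exports.
Local Open Scope classical_set_scope.
Local Open Scope ring_scope.



Section Aux.
Variables (R : realType) (n : nat).
Notation signal := (signal R n).
Notation mu := (@lebesgue_measure R).
Implicit Types (u v w : signal).

Definition sadd u v : signal := fun t i => u t i + v t i.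

Lemma vdot_ge0 (x : 'I_n -> R) : 0 <= vdot x x.
Proof. by apply: sumr_ge0 => i _; rewrite -expr2 sqr_ge0. Qed.

Lemma vdotC (x y : 'I_n -> R) : vdot x y = vdot y x.
Proof. by apply: eq_bigr => i _; rewrite mulrC. Qed.

Lemma vdot0r (x : 'I_n -> R) : vdot x (fun _ => 0) = 0.
Proof. by apply: big1 => i _; rewrite mulr0. Qed.

Lemma vdotDl (x y z : 'I_n -> R) :
  vdot (fun i => x i + y i) z = vdot x z + vdot y z.
Proof. by rewrite /vdot -big_split; apply: eq_bigr => i _; rewrite mulrDl. Qed.

Lemma vdot_amgm (x y : 'I_n -> R) (a : R) : 0 < a ->
  2 * vdot x y <= a * vdot x x + a^-1 * vdot y y.
Proof.
move=> a0; rewrite /vdot !mulr_sumr -big_split; apply: ler_sum => i _ /=.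
have h : 0 <= a^-1 * (a * x i - y i) ^+ 2.
  by apply: mulr_ge0; [rewrite invr_ge0 ltW | exact: sqr_ge0].
have an : a != 0 by rewrite gt_eqF.
have e : a * (x i * x i) + a^-1 * (y i * y i) = 2 * (x i * y i) + a^-1 * (a * x i - y i) ^+ 2.
  by field.
by rewrite e lerDl.
Qed.

Lemma vdot_amgmN (x y : 'I_n -> R) (a : R) : 0 < a ->
  2 * - vdot x y <= a * vdot x x + a^-1 * vdot y y.
Proof.
move=> a0; have := vdot_amgm (fun i => - x i) y a0.
have -> : vdot (fun i => - x i) y = - vdot x y.
  by rewrite /vdot -sumrN; apply: eq_bigr => i _; rewrite mulNr.
by have -> : vdot (fun i => - x i) (fun i => - x i) = vdot x x by
  apply: eq_bigr => i _; rewrite mulrNN.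
Qed.

Lemma vdot_abs (x y : 'I_n -> R) : `|vdot x y| <= vdot x x + vdot y y.
Proof.
have h1 := vdot_amgm x y ltr01; have h2 := vdot_amgmN x y ltr01.
rewrite invr1 !mul1r in h1 h2.
have := vdot_ge0 x; have := vdot_ge0 y.
case: (lerP 0 (vdot x y)) => h; [rewrite ger0_norm // | rewrite ltr0_norm //]; lra.
Qed.

End Aux.



Section B.
Variables (R : realType) (n : nat).
Notation signal := (signal R n).
Notation mu := (@lebesgue_measure R).
Implicit Types (u v w : signal).

Lemma truncE T u t i : trunc T u t i = if t <= T then u t i else 0.
Proof. by rewrite /trunc; case: ifP. Qed.

Lemma truncE' T u t i : trunc T u t i = (\1_(`]-oo, T]) t) * u t i.
Proof.
rewrite truncE indicE; case: ifP => h.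
  by rewrite mem_set ?mul1r //= in_itv /= h.
by rewrite memNset ?mul0r //= in_itv /= h.
Qed.

Lemma msig0 : sig_measurable (@sig0 R n).
Proof. by move=> i; exact: measurable_cst. Qed.

Lemma msig_trunc T u : sig_measurable u -> sig_measurable (trunc T u).
Proof.
move=> mu_ i; rewrite (_ : (fun t => trunc T u t i) = (fun t => \1_(`]-oo, T]) t * u t i)).
  apply: measurable_funM => //; exact: measurable_indic.
by apply/funext => t; rewrite truncE'.
Qed.

Lemma msig_add u v : sig_measurable u -> sig_measurable v -> sig_measurable (sadd u v).
Proof. by move=> mu_ mv i; apply: measurable_funD. Qed.

Lemma mvdot u v : sig_measurable u -> sig_measurable v ->
  measurable_fun setT (fun t => vdot (u t) (v t)).
Proof.
move=> mu_ mv; rewrite /vdot.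
by apply: measurable_sum => i; apply: measurable_funM.
Qed.

Definition sq u := fun t => vdot (u t) (u t).

Lemma L2_int u : L2 u <-> sig_measurable u /\ mu.-integrable setT (EFin \o sq u).
Proof.
rewrite /L2; split => -[mu_ h]; split => //.
  apply/integrableP; split; first by apply/measurable_EFinP; exact: mvdot.
  under eq_integral => t _ do rewrite /= ger0_norm ?vdot_ge0 //.
  exact: h.
move/integrableP: h => [_ h]; move: h; rewrite /energy.
by under eq_integral => t _ do rewrite /= ger0_norm ?vdot_ge0 //.
Qed.

Lemma int_cross u v : L2 u -> L2 v ->
  mu.-integrable setT (EFin \o (fun t => vdot (u t) (v t))).
Proof.
move=> /L2_int [mu_ iu] /L2_int [mv iv].
apply: (@le_integrable _ _ _ mu setT measurableT _ (EFin \o (fun t => sq u t + sq v t))).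
- by apply/measurable_EFinP; exact: mvdot.
- move=> t _ /=; rewrite lee_fin (ger0_norm (addr_ge0 (vdot_ge0 _) (vdot_ge0 _))).
  exact: vdot_abs.
- have -> : (EFin \o (fun t => sq u t + sq v t)) = ((EFin \o sq u) \+ (EFin \o sq v))%E.
    by apply/funext => t.
  exact: integrableD.
Qed.

End B.



Lemma amgm_cs (R : realType) (X A B : R) : 0 <= A -> 0 <= B ->
  (forall a, 0 < a -> 2 * X <= a * A ^+ 2 + a^-1 * B ^+ 2) -> X <= A * B.
Proof.
move=> A0 B0 h; apply/ler_addgt0Pr => e e0.
pose eps := e / (A + B + 1).
have S0 : 0 < A + B + 1 by lra.
have eps0 : 0 < eps by rewrite divr_gt0.
have epsAB : eps * (A + B) <= e.
  rewrite /eps mulrAC ler_pdivrMr //; nra.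
pose p := A + eps; pose q := B + eps.
have p0 : 0 < p by rewrite /p; lra.
have q0 : 0 < q by rewrite /q; lra.
have := h (q / p) (divr_gt0 q0 p0).
rewrite invf_div.
have h1 : q / p * A ^+ 2 <= q * A.
  rewrite mulrAC ler_pdivrMr // -mulrA ler_wpM2l ?(ltW q0) // expr2 ler_wpM2l //.
  rewrite /p; lra.
have h2 : p / q * B ^+ 2 <= p * B.
  rewrite mulrAC ler_pdivrMr // -mulrA ler_wpM2l ?(ltW p0) // expr2 ler_wpM2l //.
  rewrite /q; lra.
move: h1 h2; rewrite /p /q => h1 h2 h3.
nra.
Qed.

Section C.
Variables (R : realType) (n : nat).
Notation signal := (signal R n).
Notation mu := (@lebesgue_measure R).
Implicit Types (u v w : signal).

Lemma int_scale (f : R -> R) (k : R) : mu.-integrable setT (EFin \o f) ->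
  mu.-integrable setT (EFin \o (fun t => k * f t)).
Proof.
move=> h; have := integrableZl measurableT k h.
by rewrite (_ : (fun x => k%:E * (EFin \o f) x)%E = EFin \o (fun t => k * f t)) //; apply/funext.
Qed.

Lemma int_add (f g : R -> R) : mu.-integrable setT (EFin \o f) ->
  mu.-integrable setT (EFin \o g) ->
  mu.-integrable setT (EFin \o (fun t => f t + g t)).
Proof.
move=> hf hg; have := integrableD measurableT hf hg.
by rewrite (_ : ((EFin \o f) \+ (EFin \o g))%E = EFin \o (fun t => f t + g t)) //; apply/funext.
Qed.

Lemma vdot_sadd (x y : 'I_n -> R) :
  vdot (fun i => x i + y i) (fun i => x i + y i) <= 2 * vdot x x + 2 * vdot y y.
Proof.
rewrite vdotDl (vdotC x) (vdotC y) !vdotDl (vdotC y x).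
have := vdot_amgm x y ltr01; rewrite invr1 !mul1r; lra.
Qed.

Lemma L2_sig0 : L2 (@sig0 R n).
Proof.
split; first exact: msig0.
rewrite /energy.
under eq_integral => t _ do rewrite vdot0r.
by rewrite integral0.
Qed.

Lemma L2_add u v : L2 u -> L2 v -> L2 (sadd u v).
Proof.
move=> /[dup] hu /L2_int [mu_ iu] /[dup] hv /L2_int [mv iv].
apply/L2_int; split; first exact: msig_add.
apply: (@le_integrable _ _ _ mu setT measurableT _
   (EFin \o (fun t => 2 * sq u t + 2 * sq v t))).
- apply/measurable_EFinP; apply: mvdot; exact: msig_add.
- move=> t _ /=; rewrite lee_fin.
  rewrite (ger0_norm (vdot_ge0 _)) ger0_norm; last by rewrite addr_ge0 // mulr_ge0 // vdot_ge0.
  exact: vdot_sadd.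
- by apply: int_add; apply: int_scale.
Qed.

Lemma L2_trunc T u : L2 u -> L2 (trunc T u).
Proof.
move=> /L2_int [mu_ iu]; apply/L2_int; split; first exact: msig_trunc.
apply: (@le_integrable _ _ _ mu setT measurableT _ (EFin \o sq u)) => //.
- apply/measurable_EFinP; apply: mvdot; exact: msig_trunc.
- move=> t _ /=; rewrite lee_fin /sq /trunc.
  case: ifP => _ //; rewrite vdot0r normr0; exact: normr_ge0.
Qed.

Lemma L2p_trunc T u : L2p u -> L2p (trunc T u).
Proof.
move=> [hu h0]; split; first exact: L2_trunc.
by move=> t t0; rewrite /trunc; case: ifP => // _; rewrite h0.
Qed.

Lemma L2p_L2ep u : L2p u -> L2ep u.
Proof. by move=> hu T _; exact: L2p_trunc. Qed.

Lemma L2p_sig0 : L2p (@sig0 R n).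
Proof. by split; [exact: L2_sig0|]. Qed.

Lemma L2ep_sig0 : L2ep (@sig0 R n).
Proof. exact/L2p_L2ep/L2p_sig0. Qed.

Lemma L2p_add u v : L2p u -> L2p v -> L2p (sadd u v).
Proof.
move=> [hu hu0] [hv hv0]; split; first exact: L2_add.
move=> t t0; rewrite /sadd hu0 // hv0 //; apply/funext => i; exact: addr0.
Qed.

Lemma innerC u v : inner u v = inner v u.
Proof. by apply: eq_Rintegral => t _; rewrite vdotC. Qed.

Lemma inner_addl u v w : L2 u -> L2 v -> L2 w ->
  inner (sadd u v) w = inner u w + inner v w.
Proof.
move=> hu hv hw; rewrite /inner -RintegralD //; try exact: int_cross.
by apply: eq_Rintegral => t _; rewrite /sadd vdotDl.
Qed.

Lemma inner_self_ge0 u : 0 <= inner u u.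
Proof. apply: Rintegral_ge0 => t _; exact: vdot_ge0. Qed.

Lemma norm2_ge0 u : 0 <= norm2 u.
Proof. exact: sqrtr_ge0. Qed.

Lemma norm2_sqr u : norm2 u ^+ 2 = inner u u.
Proof. by rewrite /norm2 sqr_sqrtr //; exact: inner_self_ge0. Qed.

Lemma inner_amgm u v a : L2 u -> L2 v -> 0 < a ->
  2 * inner u v <= a * norm2 u ^+ 2 + a^-1 * norm2 v ^+ 2.
Proof.
move=> hu hv a0; rewrite !norm2_sqr /inner.
have iu := int_cross hu hu; have iv := int_cross hv hv; have iuv := int_cross hu hv.
rewrite -(RintegralZl 2 measurableT iuv) -(RintegralZl a measurableT iu).
rewrite -(RintegralZl a^-1 measurableT iv).
rewrite -(RintegralD measurableT (int_scale a iu) (int_scale _ iv)).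
apply: le_Rintegral => //; first exact: int_scale.
  exact: int_add (int_scale _ iu) (int_scale _ iv).
move=> t _; exact: vdot_amgm.
Qed.

Lemma inner_amgmN u v a : L2 u -> L2 v -> 0 < a ->
  2 * - inner u v <= a * norm2 u ^+ 2 + a^-1 * norm2 v ^+ 2.
Proof.
move=> hu hv a0; rewrite !norm2_sqr /inner.
have iu := int_cross hu hu; have iv := int_cross hv hv; have iuv := int_cross hu hv.
rewrite mulrN -mulNr -(RintegralZl (-2) measurableT iuv) -(RintegralZl a measurableT iu).
rewrite -(RintegralZl a^-1 measurableT iv).
rewrite -(RintegralD measurableT (int_scale a iu) (int_scale _ iv)).
apply: le_Rintegral => //; first exact: int_scale.
  exact: int_add (int_scale _ iu) (int_scale _ iv).
move=> t _; rewrite mulNr -mulrN; exact: vdot_amgmN.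
Qed.

Lemma cauchy_schwarz u v : L2 u -> L2 v -> `|inner u v| <= norm2 u * norm2 v.
Proof.
move=> hu hv.
have h1 := amgm_cs (norm2_ge0 u) (norm2_ge0 v) (fun a a0 => inner_amgm hu hv a0).
have h2 := amgm_cs (norm2_ge0 u) (norm2_ge0 v) (fun a a0 => inner_amgmN hu hv a0).
by case: (lerP 0 (inner u v)) => h; [rewrite ger0_norm | rewrite ltr0_norm].
Qed.

Lemma cs_le u v : L2 u -> L2 v -> inner u v <= norm2 u * norm2 v.
Proof.
move=> hu hv; have := cauchy_schwarz hu hv.
have := mulr_ge0 (norm2_ge0 u) (norm2_ge0 v).
by case: (lerP 0 (inner u v)) => h; [rewrite ger0_norm | rewrite ltr0_norm] => //; lra.
Qed.

Lemma cs_ge u v : L2 u -> L2 v -> - (norm2 u * norm2 v) <= inner u v.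
Proof.
move=> hu hv; have := cauchy_schwarz hu hv.
have := mulr_ge0 (norm2_ge0 u) (norm2_ge0 v).
by case: (lerP 0 (inner u v)) => h; [rewrite ger0_norm | rewrite ltr0_norm] => //; lra.
Qed.

End C.



Section D.
Variables (R : realType) (n : nat).
Notation signal := (signal R n).
Notation mu := (@lebesgue_measure R).
Implicit Types (u v w : signal).

Lemma trunc_idem T u : trunc T (trunc T u) = trunc T u.
Proof. by apply/funext => t; rewrite /trunc; case: (t <= T). Qed.

Lemma trunc_sadd T u v : trunc T (sadd u v) = sadd (trunc T u) (trunc T v).
Proof.
apply/funext => t; rewrite /trunc /sadd; case: (t <= T) => //.
by apply/funext => i /=; rewrite addr0.
Qed.

Lemma trunc_sig0 T : trunc T (@sig0 R n) = @sig0 R n.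
Proof. by apply/funext => t; rewrite /trunc; case: (t <= T). Qed.

Lemma sq_trunc T u t : sq (trunc T u) t = if t <= T then sq u t else 0.
Proof. by rewrite /sq /trunc; case: (t <= T) => //; rewrite !vdot0r. Qed.

Lemma inner_truncl T u v : inner (trunc T u) v = inner (trunc T u) (trunc T v).
Proof. by apply: eq_Rintegral => t _; rewrite /trunc; case: (t <= T) => //; rewrite vdotC !vdot0r. Qed.

Lemma inner_truncr T u v : inner u (trunc T v) = inner (trunc T u) (trunc T v).
Proof. by apply: eq_Rintegral => t _; rewrite /trunc; case: (t <= T) => //; rewrite !vdot0r. Qed.

Lemma norm2_trunc_le T u : L2 u -> norm2 (trunc T u) <= norm2 u.
Proof.
move=> hu; rewrite /norm2; apply: ler_wsqrtr.
have ht := L2_trunc T hu.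
apply: (le_Rintegral measurableT (int_cross ht ht) (int_cross hu hu)).
move=> t _; have := sq_trunc T u t; rewrite /sq => ->.
by case: ifP => // _; exact: vdot_ge0.
Qed.

Lemma norm2_sadd u v : L2 u -> L2 v -> norm2 (sadd u v) <= norm2 u + norm2 v.
Proof.
move=> hu hv; have huv := L2_add hu hv.
have h : norm2 (sadd u v) ^+ 2 <= (norm2 u + norm2 v) * norm2 (sadd u v).
  rewrite norm2_sqr inner_addl // mulrDl.
  by apply: lerD; apply: cs_le.
have := norm2_ge0 (sadd u v); rewrite le_eqVlt => /orP [/eqP <-|hp].
  by rewrite addr_ge0 // norm2_ge0.
by move: h; rewrite expr2 ler_pM2r.
Qed.

Lemma inner_null u v : L2 u -> L2 v -> norm2 u = 0 -> inner u v = 0.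
Proof.
move=> hu hv h0; have := cauchy_schwarz hu hv; rewrite h0 mul0r.
by rewrite normr_le0 => /eqP.
Qed.

(* monotone convergence on truncations *)
Lemma L2p_of_trunc u K : (forall T, 0 <= T -> L2p (trunc T u)) ->
  (forall T, 0 <= T -> norm2 (trunc T u) <= K) -> L2p u /\ norm2 u <= K.
Proof.
move=> hL hK.
have K0 : 0 <= K by apply: le_trans (hK 0 (lexx 0)); exact: norm2_ge0.
have ev : forall t, \forall k \near \oo, trunc k%:R u t = u t.
  move=> t; near=> k; rewrite /trunc ifT //.
  near: k; exact: nbhs_infty_ger.
have mu_ : sig_measurable u.
  move=> i; apply: (@measurable_fun_cvg _ _ _ setT (fun k t => trunc k%:R u t i)).
    by move=> k; case: (hL k%:R (ler0n _ _)) => -[+ _] _; apply.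
  move=> t _; apply: cvg_near_cst; near=> k.
  by have -> := (near (ev t) k).
have u0 : forall t, t < 0 -> u t = 0.
  move=> t t0; have := (hL 0 (lexx 0)).2 t t0.
  by rewrite /trunc ifT // ltW.
have Efin : forall w, L2 w -> energy w = (norm2 w ^+ 2)%:E.
  move=> w [_ hw]; rewrite norm2_sqr /inner /Rintegral fineK //.
  by rewrite ge0_fin_numE // integral_ge0 // => t _; rewrite lee_fin vdot_ge0.
pose g' := fun (k : nat) t => (sq (trunc k%:R u) t)%:E.
have mg' : forall k, measurable_fun setT (g' k).
  move=> k; apply/measurable_EFinP; apply: mvdot;
  by case: (hL k%:R (ler0n _ _)) => -[].
have g'0 : forall k t, setT t -> (0 <= g' k t)%E.
  by move=> k t _; rewrite lee_fin vdot_ge0.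
have nd : forall t, setT t -> {homo g'^~ t : k m / (k <= m)%N >-> (k <= m)%E}.
  move=> t _ k m km; rewrite /g' !sq_trunc lee_fin.
  case: ifP => h1; last by case: ifP => // _; exact: vdot_ge0.
  by rewrite ifT //; apply: le_trans h1 _; rewrite ler_nat.
have cv := cvg_monotone_convergence (mu:=mu) measurableT mg' g'0 nd.
have limE : forall t, limn (g'^~ t) = (sq u t)%:E.
  move=> t; apply/cvg_lim => //; apply: cvg_near_cst; near=> k.
  by rewrite /g' /sq (near (ev t) k).
have hE : (energy u <= (K ^+ 2)%:E)%E.
  have -> : energy u = (\int[mu]_(x in setT) (fun x0 => limn (g'^~ x0)) x)%E.
    by apply: eq_integral => t _; rewrite limE.
  rewrite -(cvg_lim _ cv) //; apply: lime_le; first exact: cvgP cv.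
  apply: nearW => k.
  have hk := hL k%:R (ler0n _ _).
  have -> : (\int[mu]_(x in setT) g' k x)%E = energy (trunc k%:R u) by [].
  rewrite Efin; last by case: hk.
  rewrite lee_fin; have := hK k%:R (ler0n _ _); have := norm2_ge0 (trunc k%:R u).
  by nra.
have hL2 : L2 u by split => //; apply: le_lt_trans hE _; exact: ltry.
split; first by split.
move: hE; rewrite (Efin u hL2) lee_fin => h.
rewrite -[K]ger0_norm // -sqrtr_sqr -[norm2 u]ger0_norm ?norm2_ge0 // -sqrtr_sqr.
exact: ler_wsqrtr.
Unshelve. all: by end_near.
Qed.


End D.



Section E.
Variables (R : realType) (n : nat).
Notation signal := (signal R n).
Notation mu := (@lebesgue_measure R).
Implicit Types (u v w : signal).

Lemma small_signal (n0 : (0 < n)%N) T d : 0 <= T -> 0 < d ->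
  exists s : signal, [/\ L2p s, (forall t, t <= T -> s t = 0) & norm2 s = d].
Proof.
move=> T0 d0.
pose i0 : 'I_n := Ordinal n0.
pose A : set R := [set` `]T, T + 1]].
pose c : 'I_n -> R := fun i => if i == i0 then d else 0.
pose s : signal := fun t i => \1_A t * c i.
have sT : forall t, t <= T -> s t = 0.
  move=> t tT; apply/funext => i; rewrite /s indicE memNset ?mul0r //.
  by rewrite /A /= in_itv /= ltNge tT.
have vc : vdot c c = d ^+ 2.
  rewrite /vdot (bigD1 i0) //= big1 ?addr0; first by rewrite /c eqxx expr2.
  by move=> i /negbTE hi; rewrite /c hi mul0r.
have sqs : forall t, sq s t = \1_A t * d ^+ 2.
  move=> t; rewrite /sq /s -vc /vdot mulr_sumr; apply: eq_bigr => i _.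
  rewrite indicE; case: (t \in A); rewrite ?mul1r ?mul0r //.
have mA : measurable A by exact: measurable_itv.
have ms : sig_measurable s.
  by move=> i; apply: measurable_funM => //; exact: measurable_indic.
have Es : energy s = (d ^+ 2)%:E.
  rewrite /energy.
  transitivity (\int[mu]_(x in A) (cst (d ^+ 2)%:E) x)%E; last first.
    have muA : mu A = 1%:E.
      rewrite (@lebesgue_measure_itv R (Interval (BRight T) (BRight (T + 1)))) /= ifT; last by rewrite lte_fin; lra.
      by rewrite -EFinB (_ : T + 1 - T = 1) //; lra.
    rewrite (integral_cst mu mA) -[RHS]mule1; congr (_ * _)%E; exact: muA.
  rewrite [RHS]integral_mkcond; apply: eq_integral => t _.
  have := sqs t; rewrite /sq => ->.
  by rewrite patchE indicE; case: (t \in A); rewrite ?mul1r ?mul0r.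
exists s; split => //.
  split; first by split => //; rewrite Es ltry.
  by move=> t t0; apply: sT; lra.
by rewrite /norm2 Es /= sqrtr_sqr ger0_norm // ltW.
Qed.

Lemma gain_bound (C : signal -> signal) M v : L2p v -> nonzero v ->
  (forall u, L2p u -> nonzero u -> norm2 (C u) / norm2 u <= M) ->
  norm2 (C v) <= M * norm2 v.
Proof.
move=> hv nv hM; have := hM v hv nv.
have vp : 0 < norm2 v by rewrite lt_def nv norm2_ge0.
by rewrite ler_pdivrMr.
Qed.

Lemma null_stable (C : signal -> signal) y : (0 < n)%N -> stable C ->
  L2p y -> norm2 y = 0 -> norm2 (C y) = 0.
Proof.
move=> n0 [_ caus hL2 [M hM]] hy y0.
have hCy := hL2 y hy.
suff [_ h] : L2p (C y) /\ norm2 (C y) <= 0.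
  by apply/eqP; rewrite eq_le h norm2_ge0.
apply: L2p_of_trunc; first by move=> T _; exact: L2p_trunc.
move=> T T0; apply/ler_addgt0Pr => e e0; rewrite add0r.
pose dl := e / (`|M| + 1).
have dl0 : 0 < dl by rewrite divr_gt0 //; exact: ltr_pwDr.
have [s [hs sT ns]] := small_signal n0 T0 dl0.
pose v := sadd y s.
have hv : L2p v by exact: L2p_add.
have tv : trunc T v = trunc T y.
  apply/funext => t; rewrite /trunc /v /sadd; case: ifP => h //.
  by rewrite (sT t h); apply/funext => i /=; rewrite addr0.
have nv : norm2 v <= dl.
  by have := norm2_sadd hy.1 hs.1; rewrite y0 add0r ns.
have vpos : 0 < norm2 v.
  have e1 : inner v s = dl ^+ 2.
    by rewrite /v (inner_addl hy.1 hs.1 hs.1) (inner_null hy.1 hs.1 y0) add0r -norm2_sqr ns.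
  have := cs_le hv.1 hs.1; rewrite e1 ns expr2 ler_pM2r //.
  by move=> h; apply: lt_le_trans h.
have nzv : nonzero v by rewrite /nonzero gt_eqF.
have -> : trunc T (C y) = trunc T (C v).
  rewrite (caus T y T0 (L2p_L2ep hy)) -tv -(caus T v T0 (L2p_L2ep hv)) //.
apply: le_trans (norm2_trunc_le T (hL2 v hv).1) _.
apply: le_trans (gain_bound hv nzv hM) _.
apply: le_trans (_ : `|M| * norm2 v <= _).
  by rewrite ler_wpM2r ?norm2_ge0 // ler_norm.
apply: le_trans (_ : `|M| * dl <= _); first by rewrite ler_wpM2l.
rewrite /dl mulrA ler_pdivrMr ?ltr_pwDr //; nra.
Qed.

End E.



Section F.
Variables (R : realType) (n : nat).
Notation signal := (signal R n).
Notation mu := (@lebesgue_measure R).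
Implicit Types (u v w : signal).

Lemma ratio_le1 (P : signal -> signal) r :
  (forall u, L2p u -> L2p (P u)) -> angle_ratios P r -> -1 <= r <= 1.
Proof.
move=> hP [u [hu nu nPu ->]].
have hPu := hP u hu.
have p0 : 0 < norm2 u * norm2 (P u).
  by rewrite mulr_gt0 // lt_def ?nu ?nPu norm2_ge0.
rewrite ler_pdivlMr // ler_pdivrMr // mulN1r mul1r.
by rewrite (cs_ge hu.1 hPu.1) (cs_le hu.1 hPu.1).
Qed.

Lemma pihalf_lt_pi : pi / 2 < pi :> R.
Proof. have := @pi_gt0 R; lra. Qed.

Lemma angle_prop (P : signal -> signal) alpha : 0 <= alpha -> alpha < pi / 2 ->
  (forall u, L2p u -> L2p (P u)) -> singular_angle P <= alpha ->
  (exists r, angle_ratios P r) /\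
  (forall u, L2p u -> cos alpha * (norm2 u * norm2 (P u)) <= inner u (P u)).
Proof.
move=> a0 api hP hang.
have apin : alpha \in `[0, pi] by rewrite in_itv /= a0 /= ltW // (lt_trans api pihalf_lt_pi).
have ne : exists r, angle_ratios P r.
  apply: contrapT => hne.
  have S0 : angle_ratios P = set0.
    by apply/seteqP; split => // r hr; apply: hne; exists r.
  move: hang; rewrite /singular_angle S0 inf0 acos0 => h.
  have : pi / 2%:R <= pi / 2 :> R by [].
  lra.
split => //.
have lb : lbound (angle_ratios P) (-1).
  by move=> r hr; have /andP[] := ratio_le1 hP hr.
have infI : -1 <= inf (angle_ratios P) <= 1.
  rewrite lb_le_inf //=; case: ne => r hr.
  apply: le_trans (ge_inf _ hr) _; first by exists (-1).
  by have /andP[] := ratio_le1 hP hr.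
have cinf : cos alpha <= inf (angle_ratios P).
  have acI : acos (inf (angle_ratios P)) \in `[0, pi].
    by rewrite in_itv /= acos_ge0 ?acos_lepi.
  rewrite -[X in _ <= X](acosK (x:=inf _)) ?in_itv //=.
  move: hang; rewrite /singular_angle le_eqVlt => /orP[/eqP ->//|h].
  by apply: ltW; rewrite ltr_cos.
move=> u hu; have hPu := hP u hu.
case: (eqVneq (norm2 u) 0) => nu.
  by rewrite nu mul0r mulr0 (inner_null hu.1 hPu.1 nu).
case: (eqVneq (norm2 (P u)) 0) => nPu.
  by rewrite nPu mulr0 mulr0 innerC (inner_null hPu.1 hu.1 nPu).
have p0 : 0 < norm2 u * norm2 (P u).
  by rewrite mulr_gt0 // lt_def ?nu ?nPu norm2_ge0.
rewrite -ler_pdivlMr //.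
apply: le_trans cinf _; apply: ge_inf; first by exists (-1).
by exists u; split.
Qed.

Lemma angle_concl (G : signal -> signal) alpha : 0 <= alpha -> alpha < pi / 2 ->
  (exists r, angle_ratios G r) -> (forall r, angle_ratios G r -> cos alpha <= r <= 1) ->
  singular_angle G <= alpha.
Proof.
move=> a0 api [r0 hr0] hS.
have apin : alpha \in `[0, pi] by rewrite in_itv /= a0 /= ltW // (lt_trans api pihalf_lt_pi).
have ca : -1 <= cos alpha by exact: cos_geN1.
have lb : lbound (angle_ratios G) (cos alpha).
  by move=> r hr; have /andP[] := hS r hr.
have infI : cos alpha <= inf (angle_ratios G) <= 1.
  rewrite lb_le_inf //=; last by exists r0.
  apply: le_trans (ge_inf _ hr0) _; first by exists (cos alpha).
  by have /andP[] := hS r0 hr0.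
have infI' : -1 <= inf (angle_ratios G) <= 1.
  by case/andP: infI => h1 h2; rewrite h2 andbT (le_trans ca h1).
have acI : acos (inf (angle_ratios G)) \in `[0, pi].
  by rewrite in_itv /= acos_ge0 ?acos_lepi.
rewrite /singular_angle leNgt; apply/negP => h.
have : cos (acos (inf (angle_ratios G))) < cos alpha by rewrite ltr_cos.
rewrite acosK ?in_itv //=.
by case/andP: infI => h1 _; rewrite ltNge h1.
Qed.

End F.



Section G.
Variables (R : realType) (n : nat) (alpha : R).
Notation signal := (signal R n).
Variables (P C : signal -> signal) (Finv : signal * signal -> signal * signal).
Hypotheses (n0 : (0 < n)%N) (a0 : 0 <= alpha) (api : alpha < pi / 2).
Hypotheses (sP : stable P) (sC : stable C).
Hypotheses (angP : singular_angle P <= alpha) (angC : singular_angle C <= alpha).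
Hypothesis (inv : causal_inverse_of P C Finv).

Notation z0 := (@sig0 R n).

Lemma decomp e : L2ep e ->
  e = sadd (Finv (e, z0)).1 (C (P (Finv (e, z0)).1)) /\
  (Finv (e, z0)).2 = P (Finv (e, z0)).1.
Proof.
move=> he; case: inv => _ lmF _ _.
have := lmF (e, z0) (conj he (@L2ep_sig0 R n)).
rewrite /loop_map; case: (Finv (e, z0)) => a b /= [h1 h2].
have hb : b = P a.
  apply/funext => t; apply/funext => i.
  have := congr1 (fun f => f t i) h2; rewrite /sig0 /=.
  by move/eqP; rewrite subr_eq0 => /eqP.
by split => //; rewrite -h1 hb.
Qed.

Lemma cos_pos : 0 < cos alpha.
Proof.
have p0 := @pi_gt0 R.
have h : -(pi / 2) < alpha < pi / 2.
  rewrite api andbT; apply: lt_le_trans a0; rewrite oppr_lt0; lra.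
exact: cos_gt0_pihalf h.
Qed.

Lemma u_bound e : L2p e ->
  L2p (Finv (e, z0)).1 /\ norm2 (Finv (e, z0)).1 <= norm2 e / cos alpha.
Proof.
move=> he.
have c0 := cos_pos; have c1 : cos alpha <= 1 := cos_le1 _.
case: (sP) => sysP causP L2P _; case: (sC) => sysC causC L2C _.
case: sysP => epP _ _; case: sysC => epC _ _.
case: inv => Fep _ _ _.
have [_ angPu] := angle_prop a0 api L2P angP.
have [_ angCu] := angle_prop a0 api L2C angC.
have hee := L2p_L2ep he.
have [de _] := decomp hee.
have hu : L2ep (Finv (e, z0)).1 := (Fep (e, z0) (conj hee (@L2ep_sig0 R n))).1.
move: de hu; set u := (Finv (e, z0)).1 => de hu.
apply: L2p_of_trunc; first by move=> T T0; exact: hu T T0.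
move=> T T0.
have huT : L2p (trunc T u) := hu T T0.
have hyT := L2P _ huT.
have hy' := L2p_trunc T hyT.
have hCy' := L2C _ hy'.
have hz := L2p_trunc T hCy'.
have eqE : trunc T e = sadd (trunc T u) (trunc T (C (trunc T (P (trunc T u))))).
  rewrite {1}de trunc_sadd; congr sadd.
  by rewrite (causC T (P u) T0 (epP u hu)) (causP T u T0 hu).
move: hyT hy' hCy' hz eqE.
set uT := trunc T u; set yT := P uT; set y' := trunc T yT; set z := trunc T (C y').
move=> hyT hy' hCy' hz eqE.
have hE := L2p_trunc T he.
have nE : norm2 (trunc T e) <= norm2 e := norm2_trunc_le T he.1.
have nuT := norm2_ge0 uT; have nEg := norm2_ge0 (trunc T e).
rewrite ler_pdivlMr //.
case: (eqVneq (norm2 y') 0) => ny'.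
  have nCy' : norm2 (C y') = 0 := null_stable n0 sC hy' ny'.
  have nz : norm2 z = 0.
    apply/eqP; rewrite eq_le norm2_ge0 andbT -nCy'; exact: (norm2_trunc_le T hCy'.1).
  have i1 : inner (trunc T e) uT = norm2 uT ^+ 2.
    by rewrite eqE (inner_addl huT.1 hz.1 huT.1) (inner_null hz.1 huT.1 nz) addr0 norm2_sqr.
  have := cs_le hE.1 huT.1; rewrite i1 expr2 => h.
  have h2 : norm2 uT <= norm2 (trunc T e) by nra.
  nra.
have ny'p : 0 < norm2 y' by rewrite lt_def ny' norm2_ge0.
have i1 : inner uT y' = inner uT yT by rewrite /y' /uT [in RHS]inner_truncl.
have i2 : inner z y' = inner y' (C y') by rewrite [RHS]innerC /z /y' [RHS]inner_truncr.
have a1 := angPu uT huT.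
have a2 := angCu y' hy'.
have n1 : norm2 y' <= norm2 yT := norm2_trunc_le T hyT.1.
have i3 : inner (trunc T e) y' = inner uT y' + inner z y'.
  by rewrite eqE (inner_addl huT.1 hz.1 hy'.1).
have cs := cs_le hE.1 hy'.1.
have s1 : cos alpha * norm2 uT * norm2 y' <= inner uT y'.
  rewrite i1; apply: le_trans a1; rewrite -mulrA ler_wpM2l ?(ltW c0) //.
  by rewrite ler_wpM2l.
have s2 : 0 <= inner z y'.
  rewrite i2; apply: le_trans a2.
  by rewrite mulr_ge0 ?(ltW c0) // mulr_ge0 // norm2_ge0.
have : cos alpha * norm2 uT * norm2 y' <= norm2 e * norm2 y'.
  apply: le_trans (_ : norm2 (trunc T e) * norm2 y' <= _); last by rewrite ler_wpM2r // norm2_ge0.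
  apply: le_trans cs; rewrite i3; lra.
by rewrite ler_pM2r // mulrC.
Qed.

Notation G := (closed_loop P Finv).

Lemma G_props : exists M, forall e, L2p e ->
  [/\ L2p (G e), norm2 (G e) <= M * norm2 e &
      cos alpha * (norm2 e * norm2 (G e)) <= inner e (G e)].
Proof.
have c0 := cos_pos.
case: (sP) => sysP causP L2P [MP hMP]; case: (sC) => _ _ L2C _.
have [_ angPu] := angle_prop a0 api L2P angP.
have [_ angCu] := angle_prop a0 api L2C angC.
exists (`|MP| / cos alpha) => e he.
have [hu nu] := u_bound he.
have [de _] := decomp (L2p_L2ep he).
rewrite /closed_loop.
move: hu nu de; set u := (Finv (e, z0)).1 => hu nu de.
have hy := L2P u hu; have hCy := L2C _ hy.
split => //.
  have h1 : norm2 (P u) <= `|MP| * norm2 u.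
    case: (eqVneq (norm2 u) 0) => nzu.
      by rewrite (null_stable n0 sP hu nzu) nzu mulr0.
    apply: le_trans (gain_bound hu nzu hMP) _.
    by rewrite ler_wpM2r ?norm2_ge0 // ler_norm.
  apply: le_trans h1 _; rewrite -mulrA ler_wpM2l // mulrC.
  by move: nu; rewrite ler_pdivlMr // ler_pdivlMr // mulrC.
have ie : inner e (P u) = inner u (P u) + inner (C (P u)) (P u).
  by rewrite -(inner_addl hu.1 hCy.1 hy.1) -de.
have ne : norm2 e <= norm2 u + norm2 (C (P u)).
  by rewrite {1}de; exact: norm2_sadd hu.1 hCy.1.
have a1 := angPu u hu; have a2 := angCu _ hy.
rewrite innerC in a2.
have hp := mulr_ge0 (ltW c0) (norm2_ge0 (P u)).
rewrite ie.
have : cos alpha * norm2 (P u) * norm2 e <= cos alpha * norm2 (P u) * (norm2 u + norm2 (C (P u))).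
  by rewrite ler_wpM2l.
nra.
Qed.

Lemma G_L2p e : L2p e -> L2p (G e).
Proof. by have [M hM] := G_props => /hM []. Qed.

Lemma nontriv : exists u0, [/\ L2p u0, nonzero u0, nonzero (P u0) &
  G (sadd u0 (C (P u0))) = P u0].
Proof.
case: (sP) => sysP causP L2P _; case: (sC) => _ _ L2C _.
case: sysP => epP _ _.
have [[r [u0 [hu0 nu0 nPu0 _]]] _] := angle_prop a0 api L2P angP.
exists u0; split => //.
case: inv => _ _ Flm _.
have hw : L2ep2 (u0, P u0) by split; apply: L2p_L2ep => //; exact: L2P.
have := Flm _ hw.
have -> : loop_map P C (u0, P u0) = (sadd u0 (C (P u0)), z0).
  rewrite /loop_map /=; congr pair.
  by apply/funext => t; apply/funext => i; rewrite /sig0 subrr.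
by rewrite /closed_loop => ->.
Qed.

Lemma G_stable : stable G.
Proof.
have [M hM] := G_props.
case: (sP) => sysP causP L2P _; case: (sC) => sysC _ L2C _.
case: (sysP) => epP P0 _; case: sysC => _ C0 _.
case: (inv) => Fep _ Flm Fcaus.
split.
- split.
  + move=> e he; apply: epP; exact: (Fep (e, z0) (conj he (@L2ep_sig0 R n))).1.
  + have hw : L2ep2 (z0, z0) by split; exact: L2ep_sig0.
    have := Flm _ hw.
    have -> : loop_map P C (z0, z0) = (z0, z0).
      rewrite /loop_map /= C0 P0; congr pair;
      by apply/funext => t; apply/funext => i; rewrite /sig0 ?addr0 ?subr0.
    by rewrite /closed_loop => ->.
  + have [u0 [hu0 nu0 nPu0 Ge0]] := nontriv.
    exists (sadd u0 (C (P u0))); split.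
      by apply: L2p_L2ep; apply: L2p_add => //; apply: L2C; exact: L2P.
    rewrite Ge0.
    apply: contrapT => hno.
    have hPu0 := L2P _ hu0.
    have [_ h] : L2p (P u0) /\ norm2 (P u0) <= 0.
      apply: L2p_of_trunc; first by move=> T _; exact: L2p_trunc.
      move=> T T0; apply: contrapT => hT; apply: hno; exists T; split => //.
      by rewrite /nonzero; apply: contra_notN hT => /eqP ->.
    move: nPu0; rewrite /nonzero; apply/negP; rewrite negbK eq_le h norm2_ge0 //=.
- move=> T e T0 he; rewrite /closed_loop.
  have hw := Fep (e, z0) (conj he (@L2ep_sig0 R n)).
  have heT : L2ep (trunc T e) by apply: L2p_L2ep; exact: he.
  have hw' := Fep (trunc T e, z0) (conj heT (@L2ep_sig0 R n)).
  rewrite (causP T _ T0 hw.1) (causP T _ T0 hw'.1).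
  have := Fcaus T (e, z0) T0 (conj he (@L2ep_sig0 R n)).
  rewrite /trunc2 /= trunc_sig0 => /(congr1 fst) /= ->.
  by [].
- exact: G_L2p.
- exists M => e he ne; have [_ h _] := hM e he.
  have ep : 0 < norm2 e by rewrite lt_def ne norm2_ge0.
  by rewrite ler_pdivrMr.
Qed.

Lemma G_angle : singular_angle G <= alpha.
Proof.
have c0 := cos_pos.
have [M hM] := G_props.
apply: angle_concl => //.
  have [u0 [hu0 nu0 nPu0 Ge0]] := nontriv.
  case: (sP) => _ _ L2P _; case: (sC) => _ _ L2C _.
  have [_ angPu] := angle_prop a0 api L2P angP.
  have [_ angCu] := angle_prop a0 api L2C angC.
  have hy := L2P _ hu0; have hCy := L2C _ hy.
  have he0 : L2p (sadd u0 (C (P u0))) by exact: L2p_add.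
  exists (inner (sadd u0 (C (P u0))) (G (sadd u0 (C (P u0)))) /
    (norm2 (sadd u0 (C (P u0))) * norm2 (G (sadd u0 (C (P u0)))))).
  exists (sadd u0 (C (P u0))); split => //; last by rewrite Ge0.
  rewrite /nonzero; apply/eqP => n0e.
  have := inner_null he0.1 hy.1 n0e.
  rewrite (inner_addl hu0.1 hCy.1 hy.1).
  have a1 := angPu u0 hu0; have a2 := angCu _ hy; rewrite innerC in a2.
  have p1 : 0 < norm2 u0 by rewrite lt_def nu0 norm2_ge0.
  have p2 : 0 < norm2 (P u0) by rewrite lt_def nPu0 norm2_ge0.
  have p3 : 0 < cos alpha * (norm2 u0 * norm2 (P u0)) by rewrite !mulr_gt0.
  have p4 : 0 <= cos alpha * (norm2 (P u0) * norm2 (C (P u0))).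
    by rewrite !mulr_ge0 ?norm2_ge0 // ltW.
  lra.
move=> r hr; have /andP[_ ->] := ratio_le1 G_L2p hr; rewrite andbT.
case: hr => e [he ne nGe ->].
have [_ _ h] := hM e he.
have p0 : 0 < norm2 e * norm2 (G e).
  by rewrite mulr_gt0 // lt_def ?ne ?nGe norm2_ge0.
by rewrite ler_pdivlMr.
Qed.

End G.

Theorem proposition6' (R : realType) (n : nat) (alpha : R)
  (P C : signal R n -> signal R n)
  (Finv : signal R n * signal R n -> signal R n * signal R n) :
  (0 < n)%N -> 0 <= alpha -> alpha < pi / 2 ->
  stable P -> stable C ->
  singular_angle P <= alpha -> singular_angle C <= alpha ->
  causal_inverse_of P C Finv ->
  stable (closed_loop P Finv) /\ singular_angle (closed_loop P Finv) <= alpha.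
Proof.
move=> n0 a0 api sP sC aP aC inv; split.
  exact: (G_stable n0 a0 api sP sC aP aC inv).
exact: (G_angle n0 a0 api sP sC aP aC inv).
Qed.


Theorem proposition6 (R : realType) (n : nat) (alpha : R)
  (P C : signal R n -> signal R n)
  (Finv : signal R n * signal R n -> signal R n * signal R n) :
  (0 < n)%N -> 0 <= alpha -> alpha < pi / 2 ->
  stable P -> stable C ->
  singular_angle P <= alpha -> singular_angle C <= alpha ->
  causal_inverse_of P C Finv ->
  stable (closed_loop P Finv) /\ singular_angle (closed_loop P Finv) <= alpha.
Proof. exact: proposition6'. Qed.
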